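(* Let $R=\bigoplus_{s\in S}R_s$ be an $S$-graded ring inducing $S$ which is nearly epsilon-strongly graded. Then the following are equivalent: (i) $R$ is graded von Neumann regular; (ii) every principal right homogeneous ideal of $R$ is generated by a homogeneous idempotent element (and likewise for left ideals); (iii) every right ideal $I$ of $R$ generated by finitely many homogeneous elements $x_1,\dots,x_n$ such that $\deg(x_i)(\deg(x_i))^{-1}=e$ for all $i$, for some nonzero idempotent $e\in S$, is generated by a homogeneous idempotent element (and likewise for left ideals).
   Context: Rings are associative, not necessarily unital. $S$-graded ring inducing $S$: $S$ a partial groupoid, $R=\bigoplus_{s\in S}R_s$, $R_sR_t\subseteq R_{st}$ when $st$ defined, $R_sR_t\ne0$ implies $st$ defined. Convention: $0\in S$, $R_0=0$, $S\setminus\{0\}=\{s:R_s\ne0\}$, undefined products set to $0$, $0$ absorbing. $H_R=\bigcup_sR_s$; for nonzero $x\in H_R$, $\deg(x)$ is the unique $s$ with $x\in R_s$. A one-sided ideal $J$ is homogeneous if $J=\bigoplus_s(J\cap R_s)$. $S$ cancellative: $0\ne su=tu$ or $0\ne us=ut$ implies $s=t$. $I(S)$: idempotents of $S$. (LRI): for every $s\in S$ there exist $s^{-1}\in S$, $e,f\in I(S)$ with $es=sf=s$, $fs^{-1}=s^{-1}e=s^{-1}$, $ss^{-1}=e$, $s^{-1}s=f$. $R_sR_t$ denotes the additive subgroup generated by products. $R$ is nearly epsilon-strongly graded if $S$ is cancellative and satisfies (LRI), and for every $s$ and $x\in R_s$ there are $\epsilon(x)\in R_sR_{s^{-1}}$,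 $\epsilon'(x)\in R_{s^{-1}}R_s$ with $\epsilon(x)x=x=x\epsilon'(x)$. $R$ is graded von Neumann regular if $x\in xRx$ for all $x\in H_R$. *)

(* Defs.v *)
From mathcomp Require Import all_boot all_algebra.
Set Implicit Arguments. Unset Strict Implicit. Unset Printing Implicit Defensive.
Import GRing.Theory.
Local Open Scope ring_scope.

Definition nu_ring (R : zmodType) (mul : R -> R -> R) : Prop :=
  (forall x y w, mul x (mul y w) = mul (mul x y) w) /\
  (forall x y w, mul (x + y) w = mul x w + mul y w) /\
  (forall x y w, mul x (y + w) = mul x y + mul x w).

(* Partial groupoid with the convention: distinguished element z plays the
   role of 0 (undefined products are set to z), z absorbing. *)
Definition pgroupoid (S : eqType) (op : S -> S -> S) (z : S) : Prop :=
  forall s, op z s = z /\ op s z = z.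

(* R = (+)_{s in S} R_s, S-graded ring inducing S; G s is R_s. *)
Definition graded_inducing (S : eqType) (op : S -> S -> S) (z : S)
  (R : zmodType) (mul : R -> R -> R) (G : S -> R -> Prop) : Prop :=
  pgroupoid op z /\ nu_ring mul /\
  (forall s, G s 0 /\ forall x y, G s x -> G s y -> G s (x - y)) /\
  (forall x, G z x -> x = 0) /\
  (forall s, s <> z -> exists x, G s x /\ x <> 0) /\
  (forall s t x y, G s x -> G t y -> G (op s t) (mul x y)) /\
  (forall s t x y, G s x -> G t y -> mul x y <> 0 -> op s t <> z) /\
  (forall x, exists (sq : seq S) (f : S -> R),
      uniq sq /\ (forall s, s \in sq -> G s (f s)) /\ x = \sum_(s <- sq) f s) /\
  (forall (sq : seq S) (f : S -> R), uniq sq ->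
      (forall s, s \in sq -> G s (f s)) -> \sum_(s <- sq) f s = 0 ->
      forall s, s \in sq -> f s = 0).

Definition cancellative (S : eqType) (op : S -> S -> S) (z : S) : Prop :=
  (forall s t u, op s u <> z -> op s u = op t u -> s = t) /\
  (forall s t u, op u s <> z -> op u s = op u t -> s = t).

Definition idem (S : eqType) (op : S -> S -> S) (e : S) : Prop := op e e = e.

Definition lri_inv (S : eqType) (op : S -> S -> S) (s t : S) : Prop :=
  exists e f, idem op e /\ idem op f /\ op e s = s /\ op s f = s /\
    op f t = t /\ op t e = t /\ op s t = e /\ op t s = f.

Definition LRI (S : eqType) (op : S -> S -> S) : Prop :=
  forall s, exists t, lri_inv op s t.

(* y belongs to R_s R_t (additive subgroup generated by products) *)
Definition prodset (S : eqType) (R : zmodType) (mul : R -> R -> R)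
  (G : S -> R -> Prop) (s t : S) (y : R) : Prop :=
  exists n (a b : 'I_n -> R), (forall i, G s (a i) /\ G t (b i)) /\
    y = \sum_(i < n) mul (a i) (b i).

Definition nearly_eps_strong (S : eqType) (op : S -> S -> S) (z : S)
  (R : zmodType) (mul : R -> R -> R) (G : S -> R -> Prop) : Prop :=
  cancellative op z /\ LRI op /\
  forall s t, lri_inv op s t -> forall x, G s x ->
    exists ex ex', prodset mul G s t ex /\ prodset mul G t s ex' /\
      mul ex x = x /\ mul x ex' = x.

Definition homogeneous (S : eqType) (R : zmodType) (G : S -> R -> Prop) (x : R)
  : Prop := exists s, G s x.

Definition graded_vnr (S : eqType) (R : zmodType) (mul : R -> R -> R)
  (G : S -> R -> Prop) : Prop :=
  forall x, homogeneous G x -> exists r, x = mul (mul x r) x.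

Definition right_ideal (R : zmodType) (mul : R -> R -> R) (J : R -> Prop) : Prop :=
  J 0 /\ (forall x y, J x -> J y -> J (x - y)) /\ (forall x r, J x -> J (mul x r)).
Definition left_ideal (R : zmodType) (mul : R -> R -> R) (J : R -> Prop) : Prop :=
  J 0 /\ (forall x y, J x -> J y -> J (x - y)) /\ (forall x r, J x -> J (mul r x)).

Definition right_ideal_gen (R : zmodType) (mul : R -> R -> R) (X : R -> Prop)
  (y : R) : Prop :=
  forall J, right_ideal mul J -> (forall x, X x -> J x) -> J y.
Definition left_ideal_gen (R : zmodType) (mul : R -> R -> R) (X : R -> Prop)
  (y : R) : Prop :=
  forall J, left_ideal mul J -> (forall x, X x -> J x) -> J y.

Definition same_set (R : Type) (I J : R -> Prop) : Prop := forall y, I y <-> J y.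

Definition right_gen_hom_idem (S : eqType) (R : zmodType) (mul : R -> R -> R)
  (G : S -> R -> Prop) (X : R -> Prop) : Prop :=
  exists u, homogeneous G u /\ mul u u = u /\
    same_set (right_ideal_gen mul X) (right_ideal_gen mul (fun v => v = u)).
Definition left_gen_hom_idem (S : eqType) (R : zmodType) (mul : R -> R -> R)
  (G : S -> R -> Prop) (X : R -> Prop) : Prop :=
  exists u, homogeneous G u /\ mul u u = u /\
    same_set (left_ideal_gen mul X) (left_ideal_gen mul (fun v => v = u)).

(* Main.v *)
Require Import Defs.
From mathcomp Require Import all_boot all_algebra.
Import GRing.Theory.
Local Open Scope ring_scope.
Set Implicit Arguments. Unset Strict Implicit.

Record hyps (S : eqType) (op : S -> S -> S) (z : S)
  (R : zmodType) (mul : R -> R -> R) (G : S -> R -> Prop) : Prop := Hyps {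
  h_z : forall s, op z s = z /\ op s z = z;
  h_mA : forall x y w, mul x (mul y w) = mul (mul x y) w;
  h_mDl : forall x y w, mul (x + y) w = mul x w + mul y w;
  h_mDr : forall x y w, mul x (y + w) = mul x y + mul x w;
  h_G0 : forall s, G s 0;
  h_GB : forall s x y, G s x -> G s y -> G s (x - y);
  h_Gz : forall x, G z x -> x = 0;
  h_GM : forall s t x y, G s x -> G t y -> G (op s t) (mul x y);
  h_dec : forall x, exists (sq : seq S) (f : S -> R),
      uniq sq /\ (forall s, s \in sq -> G s (f s)) /\ x = \sum_(s <- sq) f s;
  h_dir : forall (sq : seq S) (f : S -> R), uniq sq ->
      (forall s, s \in sq -> G s (f s)) -> \sum_(s <- sq) f s = 0 ->
      forall s, s \in sq -> f s = 0;
  h_cR : forall s t u, op s u <> z -> op s u = op t u -> s = t;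
  h_cL : forall s t u, op u s <> z -> op u s = op u t -> s = t;
  h_lri : LRI op;
  h_eps : forall s x, G s x -> exists a, x = mul x a
}.

Section Core.
Variables (S : eqType) (op : S -> S -> S) (z : S) (R : zmodType)
  (mul : R -> R -> R) (G : S -> R -> Prop).
Hypothesis H : hyps op z mul G.

Let Hz := h_z H.
Let mA := h_mA H.
Let mDl := h_mDl H.
Let mDr := h_mDr H.
Let G0 := h_G0 H.
Let GB := h_GB H.
Let Gz := h_Gz H.
Let GM := h_GM H.
Let Gdec := h_dec H.
Let Gdir := h_dir H.
Let cR := h_cR H.
Let cL := h_cL H.

Lemma mul0l w : mul 0 w = 0.
Proof.
have := mDl 0 0 w; rewrite addr0 => /(congr1 (fun v => v - mul 0 w)).
by rewrite subrr addrK.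
Qed.

Lemma mul0r w : mul w 0 = 0.
Proof.
have := mDr w 0 0; rewrite addr0 => /(congr1 (fun v => v - mul w 0)).
by rewrite subrr addrK.
Qed.

Lemma mulNl x w : mul (- x) w = - mul x w.
Proof. by apply: (addrI (mul x w)); rewrite -mDl !subrr mul0l. Qed.

Lemma mulNr x w : mul w (- x) = - mul w x.
Proof. by apply: (addrI (mul w x)); rewrite -mDr !subrr mul0r. Qed.

Lemma mulBl x y w : mul (x - y) w = mul x w - mul y w.
Proof. by rewrite mDl mulNl. Qed.

Lemma mulBr x y w : mul w (x - y) = mul w x - mul w y.
Proof. by rewrite mDr mulNr. Qed.

Lemma GD s x y : G s x -> G s y -> G s (x + y).
Proof. move=> hx hy; have := GB hx (GB (G0 s) hy); by rewrite sub0r opprK. Qed.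

Lemma G_sum (I : eqType) s (l : seq I) (P : pred I) F :
  (forall i, i \in l -> P i -> G s (F i)) -> G s (\sum_(i <- l | P i) F i).
Proof.
move=> h; rewrite big_seq_cond; apply: (big_ind (G s)).
- exact: G0.
- exact: GD.
- by move=> i /andP[] /h.
Qed.

Lemma msumr x (I : Type) (l : seq I) (P : pred I) F :
  mul x (\sum_(i <- l | P i) F i) = \sum_(i <- l | P i) mul x (F i).
Proof. exact: (big_morph (mul x) (mDr x) (mul0r x)). Qed.

Lemma msuml x (I : Type) (l : seq I) (P : pred I) F :
  mul (\sum_(i <- l | P i) F i) x = \sum_(i <- l | P i) mul (F i) x.
Proof. exact: (big_morph (fun v => mul v x) (fun a b => mDl a b x) (mul0l x)). Qed.

Lemma direct_comp (l : seq (S * R)) : (forall p, p \in l -> G p.1 p.2) ->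
  \sum_(p <- l) p.2 = 0 -> forall s, \sum_(p <- l | p.1 == s) p.2 = 0.
Proof.
move=> hl h0 s.
set sq := undup (map fst l).
case: (boolP (s \in sq)) => hs; last first.
  rewrite big_hasC //; apply/hasPn => p pl; apply: contra hs => /eqP <-.
  by rewrite mem_undup map_f.
apply: (@Gdir sq (fun t => \sum_(p <- l | p.1 == t) p.2) _ _ _ s hs).
- exact: undup_uniq.
- move=> t _; apply: G_sum => p pl /eqP <-; exact: hl.
- rewrite -[RHS]h0.
  under eq_bigr do rewrite big_mkcond.
  rewrite exchange_big /=; apply: eq_big_seq => p pl.
  have psq : p.1 \in sq by rewrite mem_undup map_f.
  rewrite (bigD1_seq p.1 psq (undup_uniq _)) /= eqxx big1 ?addr0 //.
  by move=> t /negbTE; rewrite eq_sym => ->.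
Qed.

Lemma lri_nz s t : lri_inv op s t -> s <> z -> op s t <> z /\ idem op (op s t).
Proof.
move=> [e [f [he [hf [hes [hsf [hft [hte [hst hts]]]]]]]]] sz; rewrite hst.
split=> // ez; apply: sz; rewrite -hes ez; exact: (Hz s).1.
Qed.

Lemma hom_vnr s t x r : lri_inv op s t -> G s x -> x = mul (mul x r) x ->
  exists r', G t r' /\ x = mul (mul x r') x.
Proof.
move=> hlri hx hr.
case: (eqVneq x 0) => [->|xn0].
  by exists 0; split; [exact: G0 | rewrite !mul0r].
have sz : s <> z by move=> sz; move/eqP: xn0; apply; apply: Gz; rewrite -sz.
have [ez _] := lri_nz hlri sz.
move: hlri => [e [f [he [hf [hes [hsf [hft [hte [hst hts]]]]]]]]].
rewrite hst in ez.
case: (Gdec r) => sq [g [usq [hg rE]]].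
have key : forall t', op (op s t') s == s -> t' = t.
  move=> t' /eqP h.
  have h1 : op s t' = e.
    apply: (cR (u:=s)); first by rewrite h.
    by rewrite h hes.
  apply: (cL (u:=s)); first by rewrite h1.
  by rewrite h1 hst.
pose l := (s, - x) :: [seq (op (op s t') s, mul (mul x (g t')) x) | t' <- sq].
have hl : forall p, p \in l -> G p.1 p.2.
  move=> p; rewrite inE => /orP[/eqP -> | /mapP [t' ht' ->]] /=.
    by rewrite -sub0r; apply: GB (G0 _) hx.
  by apply: GM => //; apply: GM => //; apply: hg.
have h0 : \sum_(p <- l) p.2 = 0.
  rewrite big_cons big_map /= -msuml -msumr -rE -hr.
  by rewrite addNr.
have := direct_comp hl h0 s.
rewrite big_cons /= eqxx big_map /= addrC => /eqP; rewrite subr_eq0 => /eqP hsum.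
exists (\sum_(t' <- sq | op (op s t') s == s) g t'); split.
  apply: G_sum => t' ht' /key et; rewrite -et; exact: hg.
by rewrite msumr msuml hsum.
Qed.

Lemma riD (J : R -> Prop) x y : right_ideal mul J -> J x -> J y -> J (x + y).
Proof.
move=> [J0 [JB _]] Jx Jy; have := JB _ _ Jx (JB _ _ J0 Jy).
by rewrite sub0r opprK.
Qed.

Lemma build (VNR : graded_vnr mul G) e : op e e = e -> forall l : seq R,
  (forall x, x \in l -> x = 0 \/ exists d t, G d x /\ lri_inv op d t /\ op d t = e) ->
  exists v, G e v /\ mul v v = v /\
    forall J, right_ideal mul J -> (J v <-> forall x, x \in l -> J x).
Proof.
move=> he; elim=> [|x l IH] hl.
  exists 0; split; first exact: G0; split; first by rewrite mul0l.
  by move=> J [J0 _]; split => // _ y; rewrite in_nil.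
have hl' : forall y, y \in l -> y = 0 \/ exists d t, G d y /\ lri_inv op d t /\ op d t = e.
  by move=> y yl; apply: hl; rewrite inE yl orbT.
have [u [Gu [uu hu]]] := IH hl'.
have hcons : forall J, right_ideal mul J ->
    ((forall y, y \in x :: l -> J y) <-> J x /\ J u).
  move=> J hJ; have [hu1 hu2] := hu J hJ; split.
    move=> Hy; split; first by apply: Hy; exact: mem_head.
    by apply: hu2 => y yl; apply: Hy; rewrite inE yl orbT.
  by move=> [Hx Ju] y; rewrite inE => /orP[/eqP->|]; [done | exact: hu1].
case: (hl x (mem_head x l)) => [x0 | [d [t [Gx [hlri hdt]]]]].
  exists u; split; first done; split; first done.
  move=> J hJ; apply: (iff_trans _ (iff_sym (hcons J hJ))); rewrite x0.
  split; last by case.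
  by move=> Ju; split => //; case: hJ.
have hed : op e d = d.
  case: (hlri) => [e' [f' [_ [_ [he'd [_ [_ [_ [hdt' _]]]]]]]]].
  by rewrite -hdt hdt' he'd.
have [y yE] : exists y, y = x - mul u x by eexists.
have Gy : G d y by rewrite yE; apply: (GB Gx); rewrite -hed; exact: GM Gu Gx.
have [r0 hr0] := VNR y (ex_intro _ d Gy).
have [r [Gr hr]] := hom_vnr hlri Gy hr0.
have [w wE] : exists w, w = mul y r by eexists.
have Gw : G e w by rewrite wE -hdt; exact: GM.
have uy : mul u y = 0 by rewrite yE mulBr mA uu subrr.
have uw : mul u w = 0 by rewrite wE mA uy mul0l.
have wy : mul w y = y by rewrite wE -hr.
have ww : mul w w = w by rewrite {2}wE mA wy -wE.
have [q qE] : exists q, q = w - mul w u by eexists.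
have uq : mul u q = 0 by rewrite qE mulBr uw mA uw mul0l subrr.
have qu : mul q u = 0 by rewrite qE mulBl -mA uu subrr.
have qw : mul q w = w by rewrite qE mulBl ww -mA uw mul0r subr0.
have qq : mul q q = q by rewrite {2}qE mulBr qw mA qw -qE.
have qy : mul q y = y by rewrite qE mulBl wy -mA uy mul0r subr0.
exists (u + q); split.
  apply: (GD Gu); rewrite qE; apply: (GB Gw); rewrite -he; exact: GM Gw Gu.
split; first by rewrite mDl !mDr uu uq qu qq addr0 add0r.
move=> J hJ; apply: (iff_trans _ (iff_sym (hcons J hJ))).
have [J0 [JB JM]] := hJ.
split.
  move=> Jv.
  have Ju : J u by have := JM _ u Jv; rewrite mDl uu qu addr0.
  have Jq : J q by have := JM _ q Jv; rewrite mDl uq qq add0r.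
  have Jy : J y by have := JM _ y Jq; rewrite qy.
  split => //.
  have -> : x = y + mul u x by rewrite yE subrK.
  by apply: riD => //; apply: JM.
move=> [Jx Ju].
have Jy : J y by rewrite yE; apply: JB => //; apply: JM.
have Jw : J w by rewrite wE; apply: JM.
have Jq : J q by rewrite qE; apply: JB => //; apply: JM.
exact: riD.
Qed.

Lemma gen_ext (X Y : R -> Prop) : (forall v, X v <-> Y v) ->
  right_gen_hom_idem mul G X -> right_gen_hom_idem mul G Y.
Proof.
move=> hXY [u [hu [uu hs]]]; exists u; split => //; split => // y; split => Hy.
  apply: (hs y).1 => J hJ hX; apply: Hy => // w /hXY; exact: hX.
have := (hs y).2 Hy => Hx J hJ hY; apply: Hx => // w /hXY; exact: hY.
Qed.

Lemma right_iii (VNR : graded_vnr mul G) e : idem op e -> e <> z ->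
  forall n (xs : 'I_n -> R) (d : 'I_n -> S),
    (forall i, xs i <> 0 /\ G (d i) (xs i) /\
               exists t, lri_inv op (d i) t /\ op (d i) t = e) ->
    right_gen_hom_idem mul G (fun v => exists i, v = xs i).
Proof.
move=> he ez n xs d hx.
have hl : forall y, y \in [seq xs i | i <- enum 'I_n] -> y = 0 \/
    exists d0 t, G d0 y /\ lri_inv op d0 t /\ op d0 t = e.
  move=> y /mapP [i _ ->]; right.
  have [_ [Gi [t [ht hdt]]]] := hx i.
  by exists (d i), t.
have [v [Gv [vv hv]]] := build VNR he hl.
exists v; split; first by exists e.
split; first done.
move=> y; split => Hy J hJ hX.
  apply: Hy => // x [i ->]; apply: (hv J hJ).1; first exact: hX.
  by apply/mapP; exists i; rewrite ?mem_enum.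
apply: Hy => // x ->; apply: (hv J hJ).2 => y' /mapP [i _ ->].
by apply: hX; exists i.
Qed.

Lemma right_ii (VNR : graded_vnr mul G) x : homogeneous G x ->
  right_gen_hom_idem mul G (fun v => v = x).
Proof.
case=> s Gx; case: (eqVneq x 0) => [x0 | xn0].
  exists 0; split; first by exists z; exact: G0.
  split; first by rewrite mul0l.
  move=> y; split => Hy J hJ hX; apply: Hy => // w ->; rewrite ?x0; exact: hJ.1.
have sz : s <> z by move=> sz; move/eqP: xn0; apply; apply: Gz; rewrite -sz.
have [t ht] := h_lri H s.
have [ez he] := lri_nz ht sz.
have := right_iii VNR he ez (n := 1) (xs := fun _ => x) (d := fun _ => s).
move=> h; apply: gen_ext (h _).
  move=> v; split; [by case | move=> ->; by exists ord0].
move=> i; split; first by apply/eqP.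
by split => //; exists t.
Qed.

Lemma vnr_from_gen (X : R -> Prop) x : X x -> (forall y, X y -> y = x) ->
  (exists a, x = mul x a) -> right_gen_hom_idem mul G X ->
  exists r, x = mul (mul x r) x.
Proof.
move=> Xx hX [a xa] [u [_ [uu hs]]].
have hxI : right_ideal mul (fun y => exists b, y = mul x b).
  split; first by exists 0; rewrite mul0r.
  split.
    by move=> _ _ [b1 ->] [b2 ->]; exists (b1 - b2); rewrite mulBr.
  by move=> _ r [b ->]; exists (mul b r); rewrite mA.
have huI : right_ideal mul (fun y => exists b, y = mul u b).
  split; first by exists 0; rewrite mul0r.
  split.
    by move=> _ _ [b1 ->] [b2 ->]; exists (b1 - b2); rewrite mulBr.
  by move=> _ r [b ->]; exists (mul b r); rewrite mA.
have [b ub] : exists b, u = mul x b.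
  apply: ((hs u).2 (fun J _ hJ => hJ u erefl) (fun y => exists b, y = mul x b) hxI).
  by move=> y /hX ->; exists a.
have [c xc] : exists c, x = mul u c.
  apply: ((hs x).1 (fun J _ hJ => hJ x Xx) (fun y => exists b, y = mul u b) huI).
  by move=> y ->; exists u; rewrite uu.
exists b; rewrite -ub xc mA uu //.
Qed.

Lemma vnr_of_right :
  (forall x, homogeneous G x -> right_gen_hom_idem mul G (fun v => v = x)) ->
  graded_vnr mul G.
Proof.
move=> h x hx; have [s Gx] := hx.
apply: (vnr_from_gen (X := fun v => v = x)).
- by [].
- by move=> y.
- exact: h_eps H _ _ Gx.
- exact: h.
Qed.

Lemma vnr_of_right_iii :
  (forall e, idem op e -> e <> z ->
        forall n (xs : 'I_n -> R) (d : 'I_n -> S),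
          (forall i, xs i <> 0 /\ G (d i) (xs i) /\
                     exists t, lri_inv op (d i) t /\ op (d i) t = e) ->
          right_gen_hom_idem mul G (fun v => exists i, v = xs i)) ->
  graded_vnr mul G.
Proof.
move=> h x [s Gx].
case: (eqVneq x 0) => [-> | xn0]; first by exists 0; rewrite !mul0r.
have sz : s <> z by move=> sz; move/eqP: xn0; apply; apply: Gz; rewrite -sz.
have [t ht] := h_lri H s.
have [ez he] := lri_nz ht sz.
apply: (vnr_from_gen (X := fun v => exists i : 'I_1, v = x)).
- by exists ord0.
- by move=> y [].
- exact: h_eps H _ _ Gx.
apply: (h _ he ez 1 (fun _ => x) (fun _ => s)) => i.
split; first by apply/eqP.
by split => //; exists t.
Qed.

End Core.

Lemma lri_dual (S : eqType) (op : S -> S -> S) s t :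
  lri_inv op s t -> lri_inv (fun a b => op b a) s t.
Proof.
move=> [e [f [he [hf [hes [hsf [hft [hte [hst hts]]]]]]]]].
by exists f, e.
Qed.

Unset Implicit Arguments.

Theorem proposition4p8 (S : eqType) (op : S -> S -> S) (z : S)
  (R : zmodType) (mul : R -> R -> R) (G : S -> R -> Prop) :
  graded_inducing op z mul G ->
  nearly_eps_strong op z mul G ->
  (graded_vnr mul G <->
     ((forall x, homogeneous G x -> right_gen_hom_idem mul G (fun v => v = x)) /\
      (forall x, homogeneous G x -> left_gen_hom_idem mul G (fun v => v = x))))
  /\
  (graded_vnr mul G <->
     ((forall e, idem op e -> e <> z ->
        forall n (xs : 'I_n -> R) (d : 'I_n -> S),
          (forall i, xs i <> 0 /\ G (d i) (xs i) /\
                     exists t, lri_inv op (d i) t /\ op (d i) t = e) ->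
          right_gen_hom_idem mul G (fun v => exists i, v = xs i)) /\
      (forall e, idem op e -> e <> z ->
        forall n (xs : 'I_n -> R) (d : 'I_n -> S),
          (forall i, xs i <> 0 /\ G (d i) (xs i) /\
                     exists t, lri_inv op (d i) t /\ op t (d i) = e) ->
          left_gen_hom_idem mul G (fun v => exists i, v = xs i)))).
Proof.
move=> [Hpg [[mA [mDl mDr]] [Gsub [Gz [_ [GM [_ [Gdec Gdir]]]]]]]]
  [[cR cL] [Hlri Heps]].
have eps1 : forall s x, G s x -> exists a, x = mul x a.
  move=> s x Gx; have [t ht] := Hlri s.
  have [ex [ex' [_ [_ [_ e2]]]]] := Heps s t ht x Gx; by exists ex'.
have eps2 : forall s x, G s x -> exists a, x = mul a x.
  move=> s x Gx; have [t ht] := Hlri s.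
  have [ex [ex' [_ [_ [e1 _]]]]] := Heps s t ht x Gx; by exists ex.
have lri2 : LRI (fun s t => op t s).
  by move=> s; have [t ht] := Hlri s; exists t; apply: lri_dual.
have H := @Hyps S op z R mul G Hpg mA mDl mDr (fun s => (Gsub s).1)
  (fun s => (Gsub s).2) Gz GM Gdec Gdir cR cL Hlri eps1.
have H' := @Hyps S (fun s t => op t s) z R (fun a b => mul b a) G
  (fun s => conj (Hpg s).2 (Hpg s).1) (fun x y w => esym (mA w y x))
  (fun x y w => mDr w x y) (fun x y w => mDl y w x) (fun s => (Gsub s).1)
  (fun s => (Gsub s).2) Gz (fun s t x y hx hy => GM t s y x hy hx) Gdec Gdir
  cL cR lri2 eps2.
have V' : graded_vnr mul G -> graded_vnr (fun a b => mul b a) G.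
  move=> V x hx; have [r hr] := V x hx; exists r; by rewrite mA.
split; split.
- move=> V; split; first exact: right_ii H V.
  exact: (right_ii H' (V' V)).
- by move=> [R1 _]; apply: vnr_of_right H R1.
- move=> V; split.
    move=> e he ez n xs d hx; exact (right_iii H V he ez hx).
  move=> e he ez n xs d hx.
  apply: (right_iii H' (V' V) he ez) => i.
  have [a [b [t [c1 c2]]]] := hx i.
  refine (conj a (conj b (ex_intro _ t (conj (lri_dual c1) c2)))).
- by move=> [R1 _]; apply: vnr_of_right_iii H R1.
Qed.
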